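(* For every integer $n\ge 3$ and every graph $G$, \[ \kappa'(G\times K_n)=\min\{\,n(n-1)\kappa'(G),\ (n-1)\delta(G)\,\}. \]
   Context: All graphs are finite, simple and undirected. $\kappa'(G)$ denotes the edge connectivity of $G$, the minimum number of edges whose removal disconnects $G$; it is $0$ if $G$ is disconnected or has only one vertex. $\delta(G)$ is the minimum degree of $G$ and $K_n$ is the complete graph on $n$ vertices. The direct product $G\times H$ has vertex set $V(G)\times V(H)$. Two vertices $(x,u),(y,v)$ are adjacent if and only if $xy\in E(G)$ and $uv\in E(H)$. *)

(* Defs.v *)
(* Simple graphs = symmetric irreflexive relations on a finType. *)
From HB Require Import structures.
From mathcomp Require Import all_boot.
Set Implicit Arguments. Unset Strict Implicit. Unset Printing Implicit Defensive.

Section Graphs.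
Variable T : finType.
Implicit Types (e : rel T).

Definition edges e : {set {set T}} :=
  [set [set p.1; p.2] | p in [set p : T * T | e p.1 p.2]].

Definition remove_edges e (F : {set {set T}}) : rel T :=
  fun x y => e x y && ([set x; y] \notin F).

Definition connectedb e : bool := [forall x, forall y, connect e x y].

(* Edge connectivity: 0 if at most one vertex, otherwise the minimum size of
   an edge set whose deletion disconnects the graph (F = all edges always
   qualifies, so the minimum below is attained; a disconnected graph gives 0). *)
Definition edge_conn e : nat :=
  if #|T| <= 1 then 0
  else \big[minn/#|edges e|]_(F in powerset (edges e) | ~~ connectedb (remove_edges e F)) #|F|.

Definition degree e (x : T) : nat := #|[set y | e x y]|.

Definition min_deg e : nat := \big[minn/#|T|]_(x : T) degree e x.
End Graphs.

Definition Kn_rel (n : nat) : rel 'I_n := fun i j => i != j.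

Definition direct_prod (T1 T2 : finType) (e1 : rel T1) (e2 : rel T2) : rel (T1 * T2)%type :=
  fun p q => e1 p.1 q.1 && e2 p.2 q.2.
Arguments Kn_rel n : clear implicits.

(* Main.v *)
Require Import Defs.
From mathcomp Require Import all_boot.
Set Implicit Arguments. Unset Strict Implicit. Unset Printing Implicit Defensive.

Lemma bigmin_le (I : finType) (P : pred I) (F : I -> nat) m i0 :
  P i0 -> \big[minn/m]_(i | P i) F i <= F i0.
Proof.
move=> Pi0; rewrite -big_filter.
have : i0 \in [seq i <- index_enum I | P i] by rewrite mem_filter Pi0 mem_index_enum.
elim: [seq i <- index_enum I | P i] => //= a s IH; rewrite big_cons inE.
case/orP => [/eqP <-|/IH h]; first exact: geq_minl.
exact: leq_trans (geq_minr _ _) h.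
Qed.

Lemma bigmin_ind (I : finType) (P : pred I) (F : I -> nat) m (Q : nat -> Prop) :
  Q m -> (forall i, P i -> Q (F i)) -> Q (\big[minn/m]_(i | P i) F i).
Proof.
move=> Qm QF; apply: big_ind => // a b Qa Qb.
by case: (leqP a b).
Qed.

Lemma closed_fwd (U : finType) (r : rel U) (A : {pred U}) x y :
  (forall a b, r a b -> a \in A -> b \in A) -> connect r x y -> x \in A -> y \in A.
Proof.
move=> cl /connectP [p pth ->]; elim: p x pth => //= z p IH x /andP[rxz pth] xA.
exact: IH pth (cl _ _ rxz xA).
Qed.

Lemma set2_inj (U : finType) (a b c d : U) :
  [set a; b] = [set c; d] -> (a = c /\ b = d) \/ (a = d /\ b = c).
Proof.
move=> E.
have ha : a \in [set c; d] by rewrite -E set21.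
have hb : b \in [set c; d] by rewrite -E set22.
have hc : c \in [set a; b] by rewrite E set21.
have hd : d \in [set a; b] by rewrite E set22.
case/set2P: ha => ?; case/set2P: hb => ?;
case/set2P: hc => ?; case/set2P: hd => ?; subst; auto.
Qed.

Lemma connectedb_eq (U : finType) (r1 r2 : rel U) :
  r1 =2 r2 -> connectedb r1 = connectedb r2.
Proof.
move=> E; apply: eq_forallb => x; apply: eq_forallb => y; exact: eq_connect.
Qed.

Lemma isolated_disconn (U : finType) (r : rel U) v w :
  (forall q, r v q = false) -> v != w -> ~~ connectedb r.
Proof.
move=> iso vw; apply/negP => /forallP/(_ v)/forallP/(_ w) c.
have : w \in [set v].
  apply: (closed_fwd _ c); last by rewrite set11.
  by move=> a b rab; rewrite inE => /eqP ea; rewrite ea iso in rab.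
by rewrite inE eq_sym (negbTE vw).
Qed.

Lemma edge_conn_le (U : finType) (r : rel U) F :
  1 < #|U| -> ~~ connectedb (remove_edges r F) -> edge_conn r <= #|F|.
Proof.
move=> U1 nc; rewrite /edge_conn; have -> : (#|U| <= 1) = false by rewrite leqNgt U1.
set F' := F :&: edges r.
have E : remove_edges r F =2 remove_edges r F'.
  move=> x y; rewrite /remove_edges /F' inE.
  case rxy: (r x y) => //=.
  have -> : [set x; y] \in edges r.
    by apply/imsetP; exists (x, y) => //; rewrite inE.
  by rewrite andbT.
apply: (leq_trans (bigmin_le _ _ (i0 := F') _)).
  by rewrite powersetE subsetIr /= -(connectedb_eq E).
by apply: subset_leq_card; rewrite subsetIl.
Qed.

Lemma edge_conn_attain (U : finType) (r : rel U) :
  1 < #|U| -> exists F, ~~ connectedb (remove_edges r F) /\ edge_conn r = #|F|.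
Proof.
move=> U1; rewrite /edge_conn; have -> : (#|U| <= 1) = false by rewrite leqNgt U1.
apply: (bigmin_ind (Q := fun z => exists F, ~~ connectedb (remove_edges r F) /\ z = #|F|)) => [|F /andP[_ h]]; last by exists F.
exists (edges r); split => //.
have [x [y [_ _ xy]]] := card_gt1P U1.
apply: (isolated_disconn (v := x) (w := y)) => // q.
rewrite /remove_edges; case rxq: (r x q) => //=.
have -> : [set x; q] \in edges r by apply/imsetP; exists (x, q) => //; rewrite inE.
by [].
Qed.

Lemma card_neq n : #|[set ij : 'I_n * 'I_n | ij.1 != ij.2]| = n * (n - 1).
Proof.
set D := [set (i, i) | i : 'I_n].
have -> : [set ij : 'I_n * 'I_n | ij.1 != ij.2] = ~: D.
  apply/setP => [[i j]]; rewrite !inE /=; apply/idP/idP.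
    by move=> ij; apply/imsetP => -[k _ [ei ej]]; rewrite ei ej eqxx in ij.
  by apply: contra => /eqP ->; apply/imsetP; exists j.
have := cardsC D; rewrite card_prod card_ord card_imset ?card_ord; last by move=> a b [].
by move=> h; rewrite mulnBr muln1 -h addKn.
Qed.


Lemma mindeg_le (T : finType) (e : rel T) x : min_deg e <= degree e x.
Proof. exact: bigmin_le. Qed.

Lemma mindeg_attain (T : finType) (e : rel T) :
  irreflexive e -> 0 < #|T| -> exists x, min_deg e = degree e x.
Proof.
move=> irr /card_gt0P [x0 _].
have : (#|T| <= min_deg e) || [exists x, min_deg e == degree e x].
  rewrite /min_deg; apply: (bigmin_ind (Q := fun z => (#|T| <= z) || [exists x, z == degree e x])).
    by rewrite leqnn.
  by move=> x _; apply/orP; right; apply/existsP; exists x.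
case/orP => [h|/existsP [x /eqP]]; last by exists x.
have : degree e x0 < #|T|.
  rewrite /degree; apply: proper_card; apply/properP; split; first exact: subset_predT.
  by exists x0 => //; rewrite inE irr.
by rewrite ltnNge (leq_trans h (mindeg_le e x0)).
Qed.

Lemma nbr_card n (T : finType) (e : rel T) x (i : 'I_n) :
  #|[set q | direct_prod e (Kn_rel n) (x, i) q]| = degree e x * (n - 1).
Proof.
have -> : [set q | direct_prod e (Kn_rel n) (x, i) q] = setX [set y | e x y] [set~ i].
  by apply/setP => -[y j]; rewrite !inE /direct_prod /Kn_rel /= eq_sym.
by rewrite cardsX cardsC1 card_ord subn1.
Qed.

Lemma Hsym n (T : finType) (e : rel T) : symmetric e -> symmetric (direct_prod e (Kn_rel n)).
Proof. by move=> se p q; rewrite /direct_prod /Kn_rel se eq_sym. Qed.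

Lemma cardV n (T : finType) : 3 <= n -> 0 < #|T| -> 1 < #|{: T * 'I_n}|.
Proof.
move=> hn hT; rewrite card_prod card_ord.
by apply: leq_trans (leq_pmull _ hT); apply: leq_trans hn.
Qed.


Lemma ng_uniq n (P : pred 'I_n) (b : 'I_n -> bool) j1 j2 : 2 < n ->
  (exists i, P i) -> (exists i, ~~ P i) ->
  (forall i, i != j1 -> P i = b j1) -> (forall i, i != j2 -> P i = b j2) -> j1 = j2.
Proof.
move=> hn [ia Pa] [ib Pb] h1 h2; apply/eqP/negPn/negP => j12.
have [m mj] : exists m, m \notin [set j1; j2].
  apply/existsP; rewrite -negb_forall; apply/negP => /forallP all.
  have : #|'I_n| <= #|[set j1; j2]| by apply: subset_leq_card; apply/subsetP => x _; exact: all.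
  rewrite card_ord cards2 => h.
  have : n <= 2 by apply: leq_trans h _; rewrite ltnS leq_b1.
  by rewrite leqNgt hn.
rewrite !inE negb_or in mj; case/andP: mj => m1 m2.
have all : forall i, P i = b j1.
  move=> i; case: (eqVneq i j1) => [->|]; last exact: h1.
  by rewrite h2 ?(negbTE j12) // -(h2 m m2) h1.
by move: Pb; rewrite all -(all ia) Pa.
Qed.


Lemma lower n (T : finType) (e : rel T) :
  3 <= n -> symmetric e -> irreflexive e -> 0 < #|T| ->
  minn (n * (n - 1) * edge_conn e) ((n - 1) * min_deg e) <=
  edge_conn (direct_prod e (Kn_rel n)).
Proof.
move=> hn se irr hT.
have n1 : 1 < n by apply: leq_trans hn.
pose i0 : 'I_n := Ordinal (ltnW n1).
set H := direct_prod e (Kn_rel n).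
have [F [ncF ->]] := edge_conn_attain H (cardV hn hT).
have [u /forallPn [v nc]] := forallPn ncF.
pose S := [set w | connect (remove_edges H F) u w].
have cutF : forall p q, H p q -> p \in S -> q \notin S -> [set p; q] \in F.
  move=> p q Hpq; rewrite !inE => cp; apply: contraR => nF.
  by apply: (connect_trans cp); apply: connect1; rewrite /remove_edges Hpq.
have cutF' : forall p q, H p q -> (p \in S) != (q \in S) -> [set p; q] \in F.
  move=> p q Hpq; case pS: (p \in S) => /=; first by move=> qS; apply: cutF.
  move=> qS; have qS' : q \in S by move: qS; case: (q \in S).
  rewrite setUC; apply: cutF => //; last by rewrite pS.
  by rewrite /H (Hsym se).
case: (boolP [exists x, [exists i, (x, i) \in S] && [exists i, (x, i) \notin S]]).
  case/existsP => x /andP [/existsP [ia ina] /existsP [ib inb]].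
  apply: leq_trans (geq_minr _ _) _.
  pose good y j := [exists i, (i != j) && (((x, i) \in S) != ((y, j) \in S))].
  pose D := [set p : T * 'I_n | e x p.1 && good p.1 p.2].
  pose B := [set p : T * 'I_n | e x p.1 && ~~ good p.1 p.2].
  pose g (p : T * 'I_n) :=
    [set (x, odflt p.2 [pick i | (i != p.2) && (((x, i) \in S) != (p \in S))]); p].
  have DF : #|D| <= #|F|.
    rewrite -(card_in_imset (f := g)).
      apply: subset_leq_card; apply/subsetP => s /imsetP [[y j]].
      rewrite inE /= => /andP [exy gd] ->; rewrite /g /=.
      case: pickP => [i /andP [ij Sij]|none] /=.
        by apply: cutF' => //; rewrite /H /direct_prod /Kn_rel /= exy.
      by case/existsP: gd => i; rewrite none.
    move=> [y j] [y' j']; rewrite !inE /= => /andP [exy _] /andP [exy' _].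
    rewrite /g; case/set2_inj => [[_ ->] //|[[ey' _] _]].
    by rewrite -ey' irr in exy'.
  have ngP : forall y j, ~~ good y j -> forall i, i != j -> ((x, i) \in S) = ((y, j) \in S).
    move=> y j; rewrite negb_exists => /forallP h i ij.
    by move: (h i); rewrite ij /= negbK => /eqP.
  have BN : #|B| <= degree e x.
    rewrite -(card_in_imset (f := fst)).
      apply: subset_leq_card; apply/subsetP => y /imsetP [[y0 j]].
      by rewrite !inE /= => /andP [h _] ->.
    move=> [y j] [y' j']; rewrite !inE /= => /andP [_ g1] /andP [_ g2] ey.
    move: ey g2 => /= <- g2; congr (_, _).
    apply: (ng_uniq (P := fun i => (x, i) \in S) (b := fun j => (y, j) \in S) hn).
    - by exists ia.
    - by exists ib.
    - exact: ngP g1.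
    - exact: ngP g2.
  have DB : #|D| + #|B| = degree e x * n.
    have := cardsID [set p : T * 'I_n | good p.1 p.2] (setX [set y | e x y] setT).
    rewrite cardsX cardsT card_ord => <-; congr (_ + _); apply: eq_card => -[y j]; rewrite !inE //=.
    - by rewrite andbT.
    - by rewrite andbT andbC.
  apply: leq_trans DF; rewrite mulnC (leq_trans (leq_mul (mindeg_le e x) (leqnn _))) //.
  by rewrite mulnBr muln1 -DB leq_subLR (addnC (degree e x)) leq_add2l.
move=> nex.
have fib : forall x i j, (x, i) \in S -> (x, j) \in S.
  move=> x i j hi; apply/negPn/negP => hj; move/negP: nex; apply; apply/existsP.
  exists x; apply/andP; split; apply/existsP; first by exists i.
  by exists j.
pose A := [set x | (x, i0) \in S].
have inA : forall x i, ((x, i) \in S) = (x \in A).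
  by move=> x i; rewrite [x \in A]inE; apply/idP/idP; apply: fib.
have uA : u.1 \in A by rewrite -(inA _ u.2) -surjective_pairing inE connect0.
have vA : v.1 \notin A by rewrite -(inA _ v.2) -surjective_pairing inE.
have T1 : 1 < #|T|.
  by apply/card_gt1P; exists u.1, v.1; split => //; apply: contraNneq vA => <-.
pose Cross := [set xy : T * T | [&& xy.1 \in A, xy.2 \notin A & e xy.1 xy.2]].
pose F0 := [set [set xy.1; xy.2] | xy in Cross].
have kF0 : edge_conn e <= #|F0|.
  apply: edge_conn_le T1 _; apply/negP => /forallP/(_ u.1)/forallP/(_ v.1) c.
  move/negP: vA; apply; apply: (closed_fwd _ c) uA => a b.
  rewrite /remove_edges => /andP [eab nF] aA.
  apply/negPn/negP => bA; move/negP: nF; apply; apply/imsetP; exists (a, b) => //.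
  by rewrite inE /= aA bA eab.
have CF : #|Cross| * (n * (n - 1)) <= #|F|.
  rewrite -card_neq -cardsX.
  rewrite -(card_in_imset (f := fun t : (T * T) * ('I_n * 'I_n) =>
                                 [set (t.1.1, t.2.1); (t.1.2, t.2.2)])).
    apply: subset_leq_card; apply/subsetP => s /imsetP [[[x y] [i j]]].
    rewrite !inE /= => /andP [/and3P [xA yA exy] ij] ->.
    apply: cutF; rewrite ?inA ?inE //; by rewrite /H /direct_prod /Kn_rel /= exy.
  move=> [[x y] [i j]] [[x' y'] [i' j']].
  rewrite !inE /= => /andP [/and3P [xA _ _] _] /andP [/and3P [_ yA' _] _].
  case/set2_inj => [[[-> ->] [-> ->]] // | [[ex _] _]].
  by rewrite -ex xA in yA'.
apply: leq_trans (geq_minl _ _) _; apply: leq_trans CF.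
rewrite [X in _ <= X]mulnC leq_mul2l (leq_trans kF0) ?orbT //.
exact: leq_imset_card.
Qed.


Lemma upper1 n (T : finType) (e : rel T) :
  3 <= n -> symmetric e -> irreflexive e -> 0 < #|T| ->
  edge_conn (direct_prod e (Kn_rel n)) <= (n - 1) * min_deg e.
Proof.
move=> hn se irr hT.
have n1 : 1 < n by apply: leq_trans hn.
pose i0 : 'I_n := Ordinal (ltnW n1). pose i1 : 'I_n := Ordinal n1.
have [x0 ->] := mindeg_attain irr hT.
set H := direct_prod e (Kn_rel n).
pose v0 := (x0, i0).
pose F1 := [set [set v0; q] | q in [set q | H v0 q]].
apply: leq_trans (edge_conn_le (F := F1) (cardV hn hT) _) _.
  apply: (isolated_disconn (v := v0) (w := (x0, i1))).
    move=> q; rewrite /remove_edges; case Hq: (H v0 q) => //=.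
    by apply/negbF/imsetP; exists q; rewrite ?inE.
  by rewrite /v0 xpair_eqE eqxx /=.
by rewrite (leq_trans (leq_imset_card _ _)) // nbr_card mulnC.
Qed.

Lemma upper2 n (T : finType) (e : rel T) :
  3 <= n -> symmetric e -> irreflexive e -> 0 < #|T| ->
  edge_conn (direct_prod e (Kn_rel n)) <= n * (n - 1) * edge_conn e.
Proof.
move=> hn se irr hT.
have n1 : 1 < n by apply: leq_trans hn.
pose i0 : 'I_n := Ordinal (ltnW n1). pose i1 : 'I_n := Ordinal n1.
set H := direct_prod e (Kn_rel n).
case: (leqP #|T| 1) => T1.
  have [x0 _] := card_gt0P hT.
  apply: leq_trans (edge_conn_le (F := set0) (cardV hn hT) _) _; last by rewrite cards0.
  apply: (isolated_disconn (v := (x0, i0)) (w := (x0, i1))).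
    move=> [y j]; rewrite /remove_edges /H /direct_prod /=.
    move/card_le1_eqP: T1 => h1; by rewrite (h1 x0 y) ?inE ?irr.
  by rewrite xpair_eqE eqxx /=.
have [FG [ncG ->]] := edge_conn_attain e T1.
have [x /forallPn [y nc]] := forallPn ncG.
pose O := [set ab : T * T | ([set ab.1; ab.2] \in FG) && (enum_rank ab.1 < enum_rank ab.2)].
pose Neq := [set ij : 'I_n * 'I_n | ij.1 != ij.2].
pose F' := [set [set (t.1.1, t.2.1); (t.1.2, t.2.2)] | t in setX O Neq].
apply: leq_trans (edge_conn_le (F := F') (cardV hn hT) _) _.
  apply/negP => /forallP/(_ (x, i0))/forallP/(_ (y, i0)) c.
  move: nc => /negP; apply.
  have : (y, i0) \in [set w | connect (remove_edges e FG) x w.1].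
    apply: (closed_fwd _ c); last by rewrite inE connect0.
    move=> [p1 p2] [q1 q2]; rewrite !inE /remove_edges /H /direct_prod /Kn_rel /=.
    case/andP => /andP [epq npq] nF cx; apply: (connect_trans cx); apply: connect1.
    rewrite epq /=; apply/negP => inFG.
    have pq1 : p1 != q1 by apply: contraTneq epq => ->; rewrite irr.
    have rk : enum_rank p1 != enum_rank q1 by apply: contra pq1 => /eqP/enum_rank_inj ->.
    move/negP: nF; apply.
    case: (ltngtP (enum_rank p1) (enum_rank q1)) => r; last by move/val_inj: r rk => ->; rewrite eqxx.
      by apply/imsetP; exists ((p1, q1), (p2, q2)) => //; rewrite !inE /= inFG r.
    apply/imsetP; exists ((q1, p1), (q2, p2)); last by rewrite /= setUC.
    by rewrite !inE /= setUC inFG r eq_sym.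
  by rewrite inE.
apply: leq_trans (leq_imset_card _ _) _.
rewrite cardsX card_neq mulnC leq_mul2l; apply/orP; right.
have <- : #|[set [set ab.1; ab.2] | ab in O]| = #|O|.
  apply: card_in_imset => -[a b] [c d]; rewrite !inE /= => /andP [_ ab] /andP [_ cd].
  case/set2_inj => [[-> ->] //|[ad bc]]; subst.
  by rewrite ltnNge (ltnW ab) in cd.
by apply: subset_leq_card; apply/subsetP => s /imsetP [ab]; rewrite inE => /andP [h _] ->.
Qed.

Unset Implicit Arguments. Set Strict Implicit.

Theorem corollary1 (n : nat) (T : finType) (e : rel T) :
  3 <= n -> symmetric e -> irreflexive e -> 0 < #|T| ->
  edge_conn (direct_prod e (Kn_rel n)) =
  minn (n * (n - 1) * edge_conn e) ((n - 1) * min_deg e).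
Proof.
move=> hn se irr hT; apply/eqP; rewrite eqn_leq lower // andbT leq_min.
by rewrite upper1 // upper2.
Qed.
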